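(* Let $\mathrm y^\star\in\mathbb R^{d|\mathbb V|}$ and $\zeta^\star=\mathcal E^T\mathrm y^\star$, and suppose $\mathbf 0\in k^{-1}(\mathrm y^\star)+\mathcal E\gamma(\zeta^\star)$. Suppose further that for every $e\in\mathbb E$ the function $\Gamma_e$ is strictly convex on a neighborhood of $\zeta^\star_e$. Define $G:\mathrm{IM}(\mathcal E^T)\to\mathbb R\cup\{\pm\infty\}$ by $G(\zeta)=\inf\{K^\star(\mathrm y):\mathcal E^T\mathrm y=\zeta\}$. Then $\zeta^\star$ is the unique minimizer of $\Gamma(\zeta)+G(\zeta)$ over $\zeta\in\mathrm{IM}(\mathcal E^T)$.
   Context: $\mathcal G=(\mathbb V,\mathbb E)$ is a finite graph with arbitrarily oriented edges and incidence matrix $E$ ($E_{ik}=-1$, $E_{jk}=1$ for edge $k=(i,j)$, other entries of column $k$ zero); $d\ge1$, $\mathcal E=E\otimes I_d$, $\mathrm{IM}(\mathcal E^T)$ the image of $\mathcal E^T$. For each $i\in\mathbb V$, $k_i\subseteq\mathbb R^d\times\mathbb R^d$ (agent steady-state input-output relation) and for each $e\in\mathbb E$, $\gamma_e\subseteq\mathbb R^d\times\mathbb R^d$ (controller steady-state relation) are maximal cyclically monotone (a relation $R$ is cyclically monotone if $\sum_{i=1}^N y_i^T(u_i-u_{i-1})\ge0$ for all $N\ge1$ and $(u_1,y_1),\dots,(u_N,y_N)\in R$, $u_0=u_N$; maximal if not strictly contained in a larger such relation), so $k_i=\partial K_i$, $\gamma_e=\partial\Gamma_e$ for closed proper convex functions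 $K_i,\Gamma_e:\mathbb R^d\to\mathbb R\cup\{+\infty\}$. $k,\gamma$ are stacked relations, viewed as set-valued maps with $k^{-1}(\mathrm y)=\{\mathrm u:(\mathrm u,\mathrm y)\in k\}$, $\gamma(\zeta)=\{\mu:(\zeta,\mu)\in\gamma\}$. $K(\mathrm u)=\sum_iK_i(\mathrm u_i)$, $\Gamma(\zeta)=\sum_e\Gamma_e(\zeta_e)$, $K^\star(y)=\sup_u\{y^Tu-K(u)\}$. $\mathcal ES=\{\mathcal Es:s\in S\}$, $A+B$ Minkowski sum. *)

(* Defs.v *)
From mathcomp Require Import ssreflect ssrfun ssrbool eqtype ssrnat seq fintype bigop.
From Stdlib Require Import Reals ClassicalEpsilon.
Set Implicit Arguments. Unset Strict Implicit. Unset Printing Implicit Defensive.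

Local Open Scope R_scope.

Definition vec (d : nat) := 'I_d -> R.
Definition vdot d (x y : vec d) : R := \big[Rplus/0]_(k < d) (x k * y k).
Definition vsub d (x y : vec d) : vec d := fun k => x k - y k.
Definition vcomb d (t : R) (x y : vec d) : vec d := fun k => t * x k + (1 - t) * y k.
Definition in_ball d (c : vec d) (r : R) (x : vec d) : Prop := forall k, Rabs (x k - c k) < r.

Inductive ext := Fin (r : R) | PInf | NInf.

Definition ele (x y : ext) : Prop :=
  match x, y with
  | NInf, _ => True
  | _, PInf => True
  | Fin a, Fin b => a <= b
  | _, _ => False
  end.
Definition elt (x y : ext) : Prop := ele x y /\ x <> y.

(* inf-addition convention: +∞ absorbs, i.e. (+∞) + (-∞) = +∞ *)
Definition eadd (x y : ext) : ext :=
  match x, y with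
  | PInf, _ => PInf
  | _, PInf => PInf
  | NInf, _ => NInf
  | _, NInf => NInf
  | Fin a, Fin b => Fin (a + b)
  end.
Definition eopp (x : ext) : ext :=
  match x with Fin a => Fin (- a) | PInf => NInf | NInf => PInf end.

Definition is_esup (S : ext -> Prop) (x : ext) : Prop :=
  (forall s, S s -> ele s x) /\ (forall b, (forall s, S s -> ele s b) -> ele x b).
Definition is_einf (S : ext -> Prop) (x : ext) : Prop :=
  (forall s, S s -> ele x s) /\ (forall b, (forall s, S s -> ele b s) -> ele b x).
Definition esup (S : ext -> Prop) : ext := epsilon (inhabits PInf) (is_esup S).
Definition einf (S : ext -> Prop) : ext := epsilon (inhabits PInf) (is_einf S).

Definition proper_fun d (f : vec d -> ext) : Prop :=
  (forall x, f x <> NInf) /\ (exists x, f x <> PInf).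
(* convexity = convexity of the epigraph *)
Definition convex_fun d (f : vec d -> ext) : Prop :=
  forall x y t a b, 0 <= t <= 1 -> ele (f x) (Fin a) -> ele (f y) (Fin b) ->
    ele (f (vcomb t x y)) (Fin (t * a + (1 - t) * b)).
(* closed = lower semicontinuous *)
Definition closed_fun d (f : vec d -> ext) : Prop :=
  forall x r, elt (Fin r) (f x) ->
    exists del, 0 < del /\ forall z, in_ball x del z -> elt (Fin r) (f z).
Definition closed_proper_convex d (f : vec d -> ext) : Prop :=
  closed_fun f /\ proper_fun f /\ convex_fun f.
Definition strictly_convex_on_ball d (f : vec d -> ext) (c : vec d) (r : R) : Prop :=
  forall x y t a b, in_ball c r x -> in_ball c r y -> x <> y -> 0 < t < 1 ->
    ele (f x) (Fin a) -> ele (f y) (Fin b) ->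
    elt (f (vcomb t x y)) (Fin (t * a + (1 - t) * b)).
Definition strictly_convex_near d (f : vec d -> ext) (c : vec d) : Prop :=
  exists r, 0 < r /\ strictly_convex_on_ball f c r.

Definition subdiff d (f : vec d -> ext) (x g : vec d) : Prop :=
  exists a, f x = Fin a /\ forall z, ele (Fin (a + vdot g (vsub z x))) (f z).

Definition cyc_monotone d (Rel : vec d -> vec d -> Prop) : Prop :=
  forall (N : nat) (u y : nat -> vec d), leq 1 N ->
    (forall j : nat, leq 1 j -> leq j N -> Rel (u j) (y j)) ->
    0 <= \big[Rplus/0]_(j <- index_iota 1 N.+1)
           vdot (y j) (vsub (u j) (if Nat.eqb j 1%nat then u N else u j.-1)).
Definition max_cyc_monotone d (Rel : vec d -> vec d -> Prop) : Prop :=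
  cyc_monotone Rel /\
  forall Rel' : vec d -> vec d -> Prop, cyc_monotone Rel' ->
    (forall a b, Rel a b -> Rel' a b) -> forall a b, Rel' a b -> Rel a b.

(* E_{v e} for an edge e oriented from (src e) to (tgt e) *)
Definition inc (V Ed : finType) (src tgt : Ed -> V) (e : Ed) (v : V) : R :=
  if v == tgt e then 1 else if v == src e then -1 else 0.
(* (E ⊗ I_d)^T y *)
Definition ET d (V Ed : finType) (src tgt : Ed -> V) (y : V -> vec d) : Ed -> vec d :=
  fun e k => \big[Rplus/0]_(v : V) (inc src tgt e v * y v k).
(* (E ⊗ I_d) mu *)
Definition Emul d (V Ed : finType) (src tgt : Ed -> V) (mu : Ed -> vec d) : V -> vec d :=
  fun v k => \big[Rplus/0]_(e : Ed) (inc src tgt e v * mu e k).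
Definition in_im_ET d (V Ed : finType) (src tgt : Ed -> V) (z : Ed -> vec d) : Prop :=
  exists y, forall e k, ET src tgt y e k = z e k.

Definition sdot d (V : finType) (y u : V -> vec d) : R :=
  \big[Rplus/0]_(v : V) vdot (y v) (u v).
Definition Ksum d (V : finType) (Kf : V -> vec d -> ext) (u : V -> vec d) : ext :=
  \big[eadd/Fin 0]_(v : V) Kf v (u v).
Definition Kstar d (V : finType) (Kf : V -> vec d -> ext) (y : V -> vec d) : ext :=
  esup (fun s => exists u, s = eadd (Fin (sdot y u)) (eopp (Ksum Kf u))).
Definition Gfun d (V Ed : finType) (src tgt : Ed -> V) (Kf : V -> vec d -> ext)
    (z : Ed -> vec d) : ext :=
  einf (fun s => exists y, (forall e k, ET src tgt y e k = z e k) /\ s = Kstar Kf y).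
Definition objective d (V Ed : finType) (src tgt : Ed -> V) (Kf : V -> vec d -> ext)
    (Gf : Ed -> vec d -> ext) (z : Ed -> vec d) : ext :=
  eadd (Ksum Gf z) (Gfun src tgt Kf z).

(* Main.v *)
From HB Require Import structures.
Require Import Defs.
From mathcomp Require Import ssreflect ssrfun ssrbool eqtype ssrnat seq fintype bigop.
From Stdlib Require Import Reals Lra ClassicalEpsilon Classical.
Local Open Scope R_scope.

Lemma RplusA : associative Rplus. Proof. move=> *; ring. Qed.
HB.instance Definition _ := Monoid.isComLaw.Build R 0 Rplus RplusA Rplus_comm Rplus_0_l.

Lemma sumRN (I : Type) (r : seq I) (P : pred I) (F : I -> R) :
  \big[Rplus/0]_(i <- r | P i) (- F i) = - \big[Rplus/0]_(i <- r | P i) F i.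
Proof.
rewrite (big_endo Ropp) //; [move=> x y; lra| lra].
Qed.

Lemma sumRMl (I : Type) (r : seq I) (P : pred I) (F : I -> R) c :
  \big[Rplus/0]_(i <- r | P i) (c * F i) = c * \big[Rplus/0]_(i <- r | P i) F i.
Proof.
rewrite (big_endo (Rmult c)) //; [move=> x y; lra| lra].
Qed.

Lemma sumR_le (I : Type) (r : seq I) (P : pred I) (F G : I -> R) :
  (forall i, F i <= G i) ->
  \big[Rplus/0]_(i <- r | P i) F i <= \big[Rplus/0]_(i <- r | P i) G i.
Proof.
move=> H; apply: (big_ind2 (fun x y => x <= y)); [lra| move=> *; lra| move=> *; apply H].
Qed.

Lemma sumR_ge0 (I : Type) (r : seq I) (P : pred I) (F : I -> R) :
  (forall i, 0 <= F i) -> 0 <= \big[Rplus/0]_(i <- r | P i) F i.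
Proof.
move=> H; apply: (big_ind (fun x => 0 <= x)); [lra| move=> *; lra| move=> *; apply H].
Qed.

Lemma sumR_term (I : finType) (j : I) (F : I -> R) :
  (forall i, 0 <= F i) -> F j <= \big[Rplus/0]_(i : I) F i.
Proof.
move=> H; rewrite (bigD1 j) //=.
have := sumR_ge0 I (index_enum I) (fun i => i != j) F H. lra.
Qed.

Lemma vdot_sub d (m a b : vec d) : vdot m (vsub a b) = vdot m a - vdot m b.
Proof.
rewrite /vdot /vsub.
rewrite (eq_bigr (fun k => m k * a k + - (m k * b k))); last by move=> k _; ring.
by rewrite big_split /= sumRN.
Qed.

Lemma vdot_ext d (m a b : vec d) : (forall k, a k = b k) -> vdot m a = vdot m b.
Proof. move=> H; rewrite /vdot; apply: eq_bigr => k _; by rewrite H. Qed.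

Lemma vdot_scal d (m a : vec d) c : vdot m (fun k => c * a k) = c * vdot m a.
Proof.
rewrite /vdot -sumRMl; apply: eq_bigr => k _; ring.
Qed.
Arguments sumR_term {I} j {F}.

Lemma ele_trans x y z : ele x y -> ele y z -> ele x z.
Proof. case: x; case: y; case: z => //= *; lra. Qed.

Lemma ele_opp x y : ele (eopp x) (eopp y) <-> ele y x.
Proof. case: x; case: y => //= *; split => *; lra. Qed.

Lemma eoppK x : eopp (eopp x) = x.
Proof. case: x => //= r; by rewrite Ropp_involutive. Qed.

Lemma esup_ex (S : ext -> Prop) : exists x, is_esup S x.
Proof.
case: (classic (S PInf)) => HP.
  exists PInf; split; first by case.
  move=> b Hb; have := Hb _ HP; clear Hb; by case: b.
case: (classic (exists r, S (Fin r))) => HF.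
  pose T := fun r => S (Fin r).
  case: (classic (bound T)) => HB.
    have [m [Hm1 Hm2]] := completeness T HB HF.
    exists (Fin m); split.
      case=> //= r Hr; exact: Hm1.
    case=> //=.
    - move=> b Hb; apply: Hm2 => r Hr; exact: (Hb _ Hr).
    - move=> Hb; case: HF => r Hr; exact: (Hb _ Hr).
  exists PInf; split; first by case.
  case=> //=.
  - move=> b Hb; apply: HB; exists b => r Hr; exact: (Hb _ Hr).
  - move=> Hb; case: HF => r Hr; exact: (Hb _ Hr).
exists NInf; split; last by [].
case=> //= r Hr; apply: HF; by exists r.
Qed.

Lemma esup_spec S : is_esup S (esup S).
Proof. rewrite /esup; apply: epsilon_spec; exact: esup_ex. Qed.

Lemma einf_ex (S : ext -> Prop) : exists x, is_einf S x.
Proof.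
have [x [H1 H2]] := esup_ex (fun s => S (eopp s)).
exists (eopp x); split.
  move=> s Hs; apply/ele_opp; rewrite eoppK; apply: H1; by rewrite eoppK.
move=> b Hb. have : ele x (eopp b).
  apply: H2 => s Hs. move: (Hb _ Hs) => H; apply/ele_opp; by rewrite eoppK.
move=> H; apply/ele_opp; by rewrite eoppK.
Qed.

Lemma einf_spec S : is_einf S (einf S).
Proof. rewrite /einf; apply: epsilon_spec; exact: einf_ex. Qed.

Lemma eadd_le a b X Y : ele (Fin a) X -> ele (Fin b) Y -> ele (Fin (a + b)) (eadd X Y).
Proof. case: X; case: Y => //= *; lra. Qed.

Lemma eadd_ub a b X : ele X (Fin b) -> ele (eadd (Fin a) X) (Fin (a + b)).
Proof. case: X => //= *; lra. Qed.

Lemma eadd_inv a b c X Y : ele (eadd X Y) (Fin c) -> ele (Fin a) X -> ele (Fin b) Y ->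
  exists x, X = Fin x /\ x + b <= c.
Proof. case: X; case: Y => //= x y *; exists y; split => //; lra. Qed.

Section BigE.
Variables (I : Type).
Lemma bigE_fin (r : seq I) (f : I -> ext) (a : I -> R) :
  (forall i, f i = Fin (a i)) ->
  \big[eadd/Fin 0]_(i <- r) f i = Fin (\big[Rplus/0]_(i <- r) a i).
Proof.
move=> H; elim: r => [|x r IH]; first by rewrite !big_nil.
by rewrite !big_cons IH H.
Qed.

Lemma bigE_le (r : seq I) (f : I -> ext) (a : I -> R) :
  (forall i, ele (Fin (a i)) (f i)) ->
  ele (Fin (\big[Rplus/0]_(i <- r) a i)) (\big[eadd/Fin 0]_(i <- r) f i).
Proof.
move=> H; elim: r => [|x r IH]; first by rewrite !big_nil /=; lra.
rewrite !big_cons; exact: eadd_le.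
Qed.

End BigE.

Lemma bigE_inv (I : eqType) (r : seq I) (f : I -> ext) :
  (forall i, f i <> NInf) -> \big[eadd/Fin 0]_(i <- r) f i <> PInf ->
  forall i, i \in r -> exists a, f i = Fin a.
Proof.
move=> H; elim: r => [|x r IH] //= Hb i.
rewrite big_cons in Hb.
have Hx : exists a, f x = Fin a.
  move: (H x) Hb; case: (f x) => //; by eauto.
case: Hx => a Ha; rewrite Ha in Hb.
rewrite in_cons => /orP [/eqP ->|Hi]; first by eauto.
apply: IH => // HP; apply: Hb; by rewrite HP.
Qed.

Definition efin (x : ext) : R := match x with Fin a => a | _ => 0 end.

Lemma elt_contra X p q : elt X (Fin p) -> ele (Fin q) X -> p <= q -> False.
Proof.
rewrite /elt; case: X => [x||] /= [H1 H2] H3 H4 //; simpl in *.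
apply: H2; f_equal; lra.
Qed.
Arguments bigE_fin {I r f a}.
Arguments bigE_le {I} r {f a}.
Arguments eadd_le {a b X Y}.
Arguments eadd_inv {a b c X Y}.
Arguments elt_contra {X p q}.
Arguments ele_trans {x y z}.

Lemma key d (V Ed : finType) (src tgt : Ed -> V) (mu : Ed -> vec d) (u y : V -> vec d)
  (z : Ed -> vec d) :
  (forall i l, u i l + Emul src tgt mu i l = 0) -> (forall e k, ET src tgt y e k = z e k) ->
  sdot y u = - \big[Rplus/0]_(e : Ed) vdot (mu e) (z e).
Proof.
move=> Hu Hz.
have E1 : sdot y u = \big[Rplus/0]_(v : V) \big[Rplus/0]_(k < d) \big[Rplus/0]_(e : Ed)
     - (y v k * (inc src tgt e v * mu e k)).
  rewrite /sdot /vdot; apply: eq_bigr => v _; apply: eq_bigr => k _.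
  have -> : u v k = - Emul src tgt mu v k by have := Hu v k; lra.
  rewrite /Emul sumRN sumRMl; ring.
have E2 : \big[Rplus/0]_(e : Ed) vdot (mu e) (z e) =
   \big[Rplus/0]_(e : Ed) \big[Rplus/0]_(k < d) \big[Rplus/0]_(v : V)
     (y v k * (inc src tgt e v * mu e k)).
  apply: eq_bigr => e _; rewrite /vdot; apply: eq_bigr => k _.
  rewrite -Hz /ET -sumRMl; apply: eq_bigr => v _; ring.
rewrite E1 E2 exchange_big /=.
under eq_bigr do rewrite exchange_big /=.
rewrite exchange_big /= -sumRN; apply: eq_bigr => e _.
rewrite -sumRN; apply: eq_bigr => k _; by rewrite -sumRN.
Qed.
Arguments key {d V Ed src tgt mu u y z}.

Theorem mainTheorem8
  (d : nat) (hd : leq 1 d)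
  (V Ed : finType) (src tgt : Ed -> V) (hloop : forall e, src e <> tgt e)
  (k : V -> vec d -> vec d -> Prop) (gam : Ed -> vec d -> vec d -> Prop)
  (Kf : V -> vec d -> ext) (Gf : Ed -> vec d -> ext)
  (hk : forall i, max_cyc_monotone (k i))
  (hgam : forall e, max_cyc_monotone (gam e))
  (hK : forall i, closed_proper_convex (Kf i))
  (hG : forall e, closed_proper_convex (Gf e))
  (hkK : forall i u y, k i u y <-> subdiff (Kf i) u y)
  (hgG : forall e z mu, gam e z mu <-> subdiff (Gf e) z mu)
  (ystar : V -> vec d) (zstar : Ed -> vec d)
  (hz : forall e l, zstar e l = ET src tgt ystar e l)
  (h0 : exists (u : V -> vec d) (mu : Ed -> vec d),
          (forall i, k i (u i) (ystar i)) /\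
          (forall e, gam e (zstar e) (mu e)) /\
          (forall i l, u i l + Emul src tgt mu i l = 0))
  (hstrict : forall e, strictly_convex_near (Gf e) (zstar e)) :
  in_im_ET src tgt zstar /\
  (forall z, in_im_ET src tgt z ->
     ele (objective src tgt Kf Gf zstar) (objective src tgt Kf Gf z)) /\
  (forall z, in_im_ET src tgt z ->
     ele (objective src tgt Kf Gf z) (objective src tgt Kf Gf zstar) ->
     forall e l, z e l = zstar e l).
Proof.
case: h0 => u [mu [Hku [Hgm Hsum]]].
pose av i := efin (Kf i (u i)).
have Hav : forall i, Kf i (u i) = Fin (av i) /\
    forall z, ele (Fin (av i + vdot (ystar i) (vsub z (u i)))) (Kf i z).
  move=> i; case: (proj1 (hkK _ _ _) (Hku i)) => a [Ha Hz]; by rewrite /av Ha /=.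
pose gv e := efin (Gf e (zstar e)).
have Hgv : forall e, Gf e (zstar e) = Fin (gv e) /\
    forall z, ele (Fin (gv e + vdot (mu e) (vsub z (zstar e)))) (Gf e z).
  move=> e; case: (proj1 (hgG _ _ _) (Hgm e)) => a [Ha Hz]; by rewrite /gv Ha /=.
pose Ku := \big[Rplus/0]_(i : V) av i.
have HKu : Ksum Kf u = Fin Ku by rewrite /Ksum; apply: bigE_fin => i; exact: (proj1 (Hav i)).
pose gs := \big[Rplus/0]_(e : Ed) gv e.
pose MZ (z : Ed -> vec d) := \big[Rplus/0]_(e : Ed) vdot (mu e) (z e).
have HET : forall e l, ET src tgt ystar e l = zstar e l by move=> *; rewrite hz.
have HKlow : forall y z, (forall e l, ET src tgt y e l = z e l) ->
    ele (Fin (- MZ z - Ku)) (Kstar Kf y).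
  move=> y z Hyz; rewrite /Kstar; case: (esup_spec
    (fun s => exists u0, s = eadd (Fin (sdot y u0)) (eopp (Ksum Kf u0)))) => H1 _.
  have := H1 _ (ex_intro _ u erefl); rewrite HKu (key Hsum Hyz).
  move=> H; apply: (ele_trans _ H); simpl; rewrite /MZ; lra.
have HKup : ele (Kstar Kf ystar) (Fin (- MZ zstar - Ku)).
  rewrite /Kstar; case: (esup_spec
    (fun s => exists u0, s = eadd (Fin (sdot ystar u0)) (eopp (Ksum Kf u0)))) => _ H2.
  apply: H2 => s [u' ->].
  have Hb := bigE_le (index_enum V) (fun i => proj2 (Hav i) (u' i)).
  rewrite big_split /= in Hb.
  have Hs : \big[Rplus/0]_(i <- index_enum V) vdot (ystar i) (vsub (u' i) (u i))
      = sdot ystar u' - sdot ystar u.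
    under eq_bigr do rewrite vdot_sub.
    by rewrite big_split /= sumRN.
  rewrite Hs (key Hsum HET) in Hb.
  move: Hb; rewrite /Ksum -/Ku; case: (\big[eadd/Fin 0]_(v <- index_enum V) Kf v (u' v)) => //=.
  move=> b Hb; rewrite /MZ; lra.
have HG1 : forall z, ele (Fin (- MZ z - Ku)) (Gfun src tgt Kf z).
  move=> z; rewrite /Gfun; case: (einf_spec (fun s => exists y,
    (forall e k, ET src tgt y e k = z e k) /\ s = Kstar Kf y)) => _ H2.
  apply: H2 => s [y [Hyz ->]]; exact: HKlow.
have HGs : ele (Gfun src tgt Kf zstar) (Fin (- MZ zstar - Ku)).
  rewrite /Gfun; case: (einf_spec (fun s => exists y,
    (forall e k, ET src tgt y e k = zstar e k) /\ s = Kstar Kf y)) => H1 _.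
  apply: ele_trans HKup; apply: H1; exists ystar; by split.
have Hsa : forall z, \big[Rplus/0]_(e : Ed) (gv e + vdot (mu e) (vsub (z e) (zstar e)))
    = gs + MZ z - MZ zstar.
  move=> z; rewrite big_split.
  have -> : \big[Rplus/0]_(e : Ed) vdot (mu e) (vsub (z e) (zstar e)) =
     \big[Rplus/0]_(e : Ed) (vdot (mu e) (z e) + - vdot (mu e) (zstar e)).
    apply: eq_bigr => e _; rewrite vdot_sub; ring.
  rewrite big_split sumRN /gs /MZ /=; ring.
have HGam : forall z, ele (Fin (gs + MZ z - MZ zstar)) (Ksum Gf z).
  move=> z; rewrite -Hsa /Ksum; apply: bigE_le => e; exact: (proj2 (Hgv e)).
pose c := gs + (- MZ zstar - Ku).
have Hobjs : ele (objective src tgt Kf Gf zstar) (Fin c).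
  rewrite /objective /Ksum (bigE_fin (fun e => proj1 (Hgv e))) -/gs.
  exact: eadd_ub.
have Hobj : forall z, ele (Fin c) (objective src tgt Kf Gf z).
  move=> z; apply: (ele_trans _ (eadd_le (HGam z) (HG1 z))); simpl; rewrite /c; lra.
split; first by exists ystar.
split; first by move=> z _; exact: ele_trans Hobjs (Hobj z).
move=> z _ Hle e l.
have Hc := ele_trans Hle Hobjs.
have [g [Hg Hgle]] := eadd_inv Hc (HGam z) (HG1 z).
have Hfin : forall e, exists a, Gf e (z e) = Fin a.
  move=> e0; apply: (bigE_inv _ (index_enum Ed) (fun e => Gf e (z e))).
  - move=> e1; exact: (proj1 (proj1 (proj2 (hG e1))) (z e1)).
  - by rewrite -/(Ksum Gf z) Hg.
  - exact: mem_index_enum.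
pose ge e := efin (Gf e (z e)).
have Hge : forall e, Gf e (z e) = Fin (ge e).
  move=> e0; case: (Hfin e0) => a Ha; by rewrite /ge Ha.
have Hgsum : g = \big[Rplus/0]_(e : Ed) ge e.
  move: Hg; rewrite /Ksum (bigE_fin Hge); by case.
pose D e := vdot (mu e) (vsub (z e) (zstar e)).
have HT : forall e, 0 <= ge e - (gv e + D e).
  move=> e0; have := proj2 (Hgv e0) (z e0); rewrite Hge /= /D; lra.
have HTs : \big[Rplus/0]_(e : Ed) (ge e - (gv e + D e)) <= 0.
  rewrite big_split /= sumRN -Hgsum /D Hsa; rewrite /c in Hgle; lra.
have Hge_le : ge e <= gv e + D e.
  have := sumR_term e HT; lra.
case: (Req_dec (z e l) (zstar e l)) => // Hne; exfalso.
case: (hstrict e) => r [Hr Hsc].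
pose M := \big[Rplus/0]_(k0 < d) Rabs (z e k0 - zstar e k0).
have HM : forall k0, Rabs (z e k0 - zstar e k0) <= M.
  move=> k0; apply: (sumR_term k0 (F := fun k0 => Rabs (z e k0 - zstar e k0))) => i.
  exact: Rabs_pos.
have HM0 : 0 <= M by apply: Rle_trans (HM l); exact: Rabs_pos.
pose t := r / (r + M).
have Htr : t * (r + M) = r by rewrite /t; field; lra.
have Ht0 : 0 < t by rewrite /t; apply: Rdiv_lt_0_compat; lra.
have Ht1 : t <= 1 by nra.
pose w := vcomb t (z e) (zstar e).
have Hwc : ele (Gf e w) (Fin (t * ge e + (1 - t) * gv e)).
  apply: (proj2 (proj2 (hG e))); [lra| rewrite Hge /=; lra| rewrite (proj1 (Hgv e)) /=; lra].
have Hbw : in_ball (zstar e) r w.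
  move=> k0; rewrite /w /vcomb.
  have -> : t * z e k0 + (1 - t) * zstar e k0 - zstar e k0 = t * (z e k0 - zstar e k0) by ring.
  rewrite Rabs_mult (Rabs_pos_eq t); last lra.
  have := HM k0; nra.
have Hbs : in_ball (zstar e) r (zstar e).
  move=> k0; rewrite Rminus_eq_0 Rabs_R0; lra.
have Hneq : w <> zstar e.
  move=> Heq; have := f_equal (fun f => f l) Heq; rewrite /w /vcomb /= => H.
  have : t * (z e l - zstar e l) = 0 by lra.
  case/Rmult_integral; lra.
have Hst := Hsc w (zstar e) (/2) _ (gv e) Hbw Hbs Hneq ltac:(lra) Hwc
  ltac:(rewrite (proj1 (Hgv e)) /=; lra).
have Hsub := proj2 (Hgv e) (vcomb (/2) w (zstar e)).
rewrite (vdot_ext _ (mu e) _ (fun k0 => (t / 2) * vsub (z e) (zstar e) k0)) in Hsub; last first.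
  move=> k0; rewrite /vsub /w /vcomb; field.
rewrite vdot_scal -/(D e) in Hsub.
apply: (elt_contra Hst Hsub); nra.
Qed.
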